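(* If $r$ is a nonnegative integer and $m$ is an integer satisfying $2m+r\ge0$, then $$2^r\binom{m+r}{r}=\sum_{i=0}^{\lfloor r/2\rfloor}(-1)^i\binom{2m+2r-2i}{r-2i}\binom{m+r}{i}.$$ *)

(* Defs.v *)
From mathcomp Require Import all_boot all_order all_algebra.
Set Implicit Arguments. Unset Strict Implicit. Unset Printing Implicit Defensive.
Import Order.TTheory GRing.Theory Num.Theory.
Local Open Scope ring_scope.

(* Generalized binomial coefficient  binom(n, k)  for an integer upper index
   n and a natural lower index k:  n (n-1) ... (n-k+1) / k!. *)
Definition binz (n : int) (k : nat) : int :=
  if (0 <= n) then ('C(`|n|%N, k))%:Z
  else (-1) ^+ k * ('C((k + `|n|%N).-1, k))%:Z.

(* Main.v *)
Require Import Defs.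
From mathcomp Require Import all_boot all_order all_algebra.
From mathcomp Require Import zify ring.
Import Order.TTheory GRing.Theory Num.Theory.
Local Open Scope ring_scope.

Lemma coef_lin (c : int) (k j : nat) :
  ((c%:P * 'X + 1) ^+ k)`_j = c ^+ j *+ 'C(k, j).
Proof.
rewrite exprD1n coef_sum.
under eq_bigr => i _ do rewrite exprMn -rmorphXn coefMn coefCM coefXn.
case: (ltnP j k.+1) => hj.
  rewrite (bigD1 (Ordinal hj)) //= eqxx mulr1 big1 ?addr0 // => i hi.
  case: eqP => [ji|]; last by rewrite mulr0 mul0rn.
  by move: hi; rewrite -(inj_eq val_inj) /= ji eqxx.
rewrite bin_small // mulr0n big1 // => i _.
case: eqP => [ji|]; last by rewrite mulr0 mul0rn.
by move: (ltn_ord i); rewrite -ji; lia.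
Qed.

Lemma widen_sum (n m : nat) (F : nat -> int) : (n <= m)%N ->
  (forall i, (n <= i < m)%N -> F i = 0) ->
  \sum_(i < n) F i = \sum_(i < m) F i.
Proof.
move=> nm hF; rewrite (big_ord_widen m F nm) big_mkcond /=.
apply: eq_bigr => i _; case: ifP => // hi; rewrite hF //; by rewrite leqNgt hi ltn_ord.
Qed.

Lemma coef_sign (i r : nat) (p : {poly int}) : ((-1) ^+ i * p)`_r = (-1) ^+ i * p`_r.
Proof. rewrite -[in LHS]signr_odd -[in RHS]signr_odd; case: (odd i); rewrite ?expr1 ?expr0 ?mul1r ?mulN1r ?coefN //. Qed.

Lemma natid (N r : nat) :
  (2 ^+ r * 'C(N, r)%:Z) =
  \sum_(i < N.+1) (if (r < 2 * i)%N then 0 else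
     (-1) ^+ i * 'C(2 * N - 2 * i, r - 2 * i)%:Z * 'C(N, i)%:Z).
Proof.
have e : (1%:P * 'X + 1 : {poly int}) ^+ 2 + (- 'X ^+ 2) = 2%:P * 'X + 1.
  rewrite polyC1 mul1r. rewrite -[2%:P]/((1+1)%:P) polyCD polyC1. ring.
have := congr1 (fun p : {poly int} => (p ^+ N)`_r) e.
rewrite /= coef_lin -mulr_natr natz => <-.
rewrite exprDn coef_sum. apply: eq_bigr => i _.
rewrite coefMn -exprM [in LHS]exprNn -exprM mulrCA coef_sign coefMXn.
case: ifP => _; first by rewrite mulr0 mul0rn.
rewrite coef_lin expr1n -mulr_natr !natz mulrA.
by rewrite mulr1 -mulr_natr natz mulnBr.
Qed.

Lemma binz_nat (n k : nat) : binz n%:Z k = 'C(n, k)%:Z.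
Proof. by []. Qed.

Theorem lemma19 (r : nat) (m : int) (h : 0 <= 2 * m + r%:Z) :
  (2 ^+ r) * binz (m + r%:Z) r =
  \sum_(i < (r./2).+1)
     (-1) ^+ i * binz (2 * m + 2 * r%:Z - 2 * (i : nat)%:Z) (r - 2 * i)%N
       * binz (m + r%:Z) i.
Proof.
have hmr : 0 <= m + r%:Z by lia.
set N := absz (m + r%:Z).
have hN : m + r%:Z = N%:Z by rewrite /N gez0_abs.
have hrN : (r <= 2 * N)%N by lia.
rewrite hN binz_nat natid.
rewrite -(@widen_sum (r./2.+1) N.+1 (fun i => if (r < 2 * i)%N then 0 else
     (-1) ^+ i * 'C(2 * N - 2 * i, r - 2 * i)%:Z * 'C(N, i)%:Z)); last first.
- move=> i /andP[hi _]; have -> : (r < 2 * i)%N; last by [].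
  by rewrite mul2n -ltn_half_double.
- by rewrite ltnS; apply: leq_trans (half_leq hrN) _; rewrite mul2n doubleK.
apply: eq_bigr => i _.
have hi : (2 * i <= r)%N by rewrite mul2n -geq_half_double -ltnS.
rewrite ltnNge hi /= binz_nat.
have -> : 2 * m + 2 * r%:Z - 2 * (i : nat)%:Z = (2 * N - 2 * i)%N%:Z by lia.
by rewrite binz_nat.
Qed.
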